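(* For the system $$u_{0,0}-v_{1,1}=0,\qquad (u_{1,0}-u_{0,0})(v_{1,0}-u_{0,0})-(u_{0,1}-u_{0,0})(v_{0,1}-u_{0,0})=0,$$ the pair $$\rho_2=\frac{v_{1,0}-v_{0,0}+u_{-1,0}-u_{-2,0}}{(v_{0,0}-u_{-2,0})(v_{1,0}-u_{-1,0})},\qquad \sigma_2=\frac{1}{v_{-1,0}-u_{-3,0}}\left(\frac{u_{-2,0}-u_{-3,0}}{u_{-1,0}-u_{-2,0}}+\frac{v_{-1,0}-2u_{-2,0}+u_{-3,0}}{v_{0,0}-u_{-2,0}}\right)$$ is a conservation law, i.e. $(\mathcal T-1)\rho_2=(\mathcal S-1)\sigma_2$ on solutions.
   Context: Unknowns $u,v$ on $\mathbb Z^2$, $u_{i,j}=u(n+i,m+j)$, similarly $v$. Shifts $\mathcal S:n\mapsto n+1$, $\mathcal T:m\mapsto m+1$, acting by $\mathcal S^k\mathcal T^\ell(f_{i,j})=f_{i+k,j+\ell}$. A conservation law is a pair $(\rho,\sigma)$ of functions of finitely many shifts of $(u,v)$ such that $(\mathcal T-1)\rho=(\mathcal S-1)\sigma$ holds for all solutions of the system (on which all denominators are nonzero). *)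

(* Defs.v *)
From HB Require Import structures.
From mathcomp Require Import all_boot all_order all_algebra.
Set Implicit Arguments. Unset Strict Implicit. Unset Printing Implicit Defensive.
Import Order.TTheory GRing.Theory Num.Theory.
Local Open Scope ring_scope.

(* Lattice fields u, v : Z^2 -> R ; u n m stands for u(n,m), so the shift
   u_{i,j} at base point (n,m) is u (n+i) (m+j). *)

Definition is_solution (R : numFieldType) (u v : int -> int -> R) : Prop :=
  forall n m : int,
    u n m - v (n + 1) (m + 1) = 0 /\
    (u (n + 1) m - u n m) * (v (n + 1) m - u n m)
      - (u n (m + 1) - u n m) * (v n (m + 1) - u n m) = 0.

Definition rho2 (R : numFieldType) (u v : int -> int -> R) (n m : int) : R :=
  (v (n + 1) m - v n m + u (n - 1) m - u (n - 2) m)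
  / ((v n m - u (n - 2) m) * (v (n + 1) m - u (n - 1) m)).

Definition sigma2 (R : numFieldType) (u v : int -> int -> R) (n m : int) : R :=
  (v (n - 1) m - u (n - 3) m)^-1 *
  ((u (n - 2) m - u (n - 3) m) / (u (n - 1) m - u (n - 2) m)
   + (v (n - 1) m - 2 * u (n - 2) m + u (n - 3) m) / (v n m - u (n - 2) m)).

Definition denominators_nonzero (R : numFieldType) (u v : int -> int -> R) : Prop :=
  forall n m : int,
    [/\ v n m - u (n - 2) m != 0,
        v (n + 1) m - u (n - 1) m != 0,
        v (n - 1) m - u (n - 3) m != 0
      & u (n - 1) m - u (n - 2) m != 0].

(* Main.v *)
Require Import Defs.
From HB Require Import structures.
From mathcomp Require Import all_boot all_order all_algebra.
From mathcomp Require Import ring.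
Import Order.TTheory GRing.Theory Num.Theory.
Local Open Scope ring_scope.

Theorem mainTheorem13 (R : numFieldType) (u v : int -> int -> R) :
  is_solution u v -> denominators_nonzero u v ->
  forall n m : int,
    rho2 u v n (m + 1) - rho2 u v n m = sigma2 u v (n + 1) m - sigma2 u v n m.
Proof.
move=> hs hd n m.
have [s0 _] := hs n m.
have [s1 r1] := hs (n-1) m.
have [s2 r2] := hs (n-2) m.
have [s3 _] := hs (n-3) m.
have [d1 d2 d3 d4] := hd n m.
have [d5 _ _ d8] := hd (n+1) m.
have [d9 d10 _ _] := hd n (m+1).
have [_ _ _ d12] := hd (n-1) m.
have e1 : n - 1 + 1 = n by ring.
have e2 : n - 2 + 1 = n - 1 by ring.
have e3 : n - 3 + 1 = n - 2 by ring.
have e4 : n + 1 - 1 = n by ring.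
have e5 : n + 1 - 2 = n - 1 by ring.
have e6 : n + 1 - 3 = n - 2 by ring.
have e7 : n - 1 - 1 = n - 2 by ring.
have e8 : n - 1 - 2 = n - 3 by ring.
move/subr0_eq: s0 => s0; move/subr0_eq: s1 => s1; move/subr0_eq: s2 => s2; move/subr0_eq: s3 => s3.
rewrite e1 in s1 r1; rewrite e2 in s2 r2; rewrite e3 in s3.
rewrite ?e4 ?e5 ?e6 in d5 d8. rewrite e7 e8 in d12.
rewrite /rho2 /sigma2 e4 e5 e6.
rewrite -s0 -s1 in d10 d9 *.
rewrite -s2 in r1. rewrite -s3 in r2.
set a := u (n-3) m in r2 d3 d12 *.
set b := u (n-2) m in r1 r2 d1 d3 d4 d12 d9 d10 *.
set c := u (n-1) m in r1 r2 d2 d4 d5 d8 d10 d9 *.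
set d := u n m in r1 d8 d9 d10 *.
set X := u (n-1) (m+1) in r1 d10 *.
set Y := u (n-2) (m+1) in r2 d9 *.
set p := v (n-1) m in r2 d3 *.
set q := v n m in r1 r2 d1 d5 *.
set s := v (n+1) m in r1 d2 *.
have hba : b - c != 0 by rewrite -oppr_eq0 opprB.
have hab : a - b != 0 by rewrite -oppr_eq0 opprB.
have hX : X = c + (d - c) * (q - c) / (b - c).
  by rewrite (subr0_eq r1) mulfK // addrC subrK.
have hY : Y = b + (c - b) * (p - b) / (a - b).
  by rewrite (subr0_eq r2) mulfK // addrC subrK.
rewrite hX hY in d9 d10 *.
field.
have -> : d * (b - c) - (c * (b - c) + (d - c) * (q - c)) = (d - (c + (d - c) * (q - c) / (b - c))) * (b - c) by field.
have -> : c * (a - b) - (b * (a - b) + (c - b) * (p - b)) = (c - (b + (c - b) * (p - b) / (a - b))) * (a - b) by field.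
by rewrite d8 hba hab d1 d4 d3 d2 !mulf_neq0.
Qed.
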